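(* Let $V$ be a finite dimensional normed vector space and let $(V,H_i,L_i)$ be holonomic spaces such that the family $\{H_i\}$ is of finite representation type and the holonomic metrics $d_{L_i}$ converge uniformly on compact sets to a semi-metric $d_\infty$ on $V$. Then there exists a closed subgroup $G\le O(V)$ such that for all $u,v\in V$, $d_\infty(u,v)=0$ if and only if $v=gu$ for some $g\in G$.
   Context: $O(V)$ is the group of norm-preserving linear maps of $V$. A group-norm on $H$ is $L:H\to\mathbb{R}$ with $L(a)\ge0$, $L(a)=0$ iff $a=e$, $L(a^{-1})=L(a)$, $L(ab)\le L(a)+L(b)$. A holonomic space is $(V,H,L)$ with $H\le O(V)$, $L$ a group-norm, such that for every $u\in V$ there is $R>0$ with $\|v-w\|^2-\|av-w\|^2\le L(a)^2$ for all $a\in H$ and $\|u-v\|,\|u-w\|<R$; its holonomic metric is $d_L(u,v)=\inf_{a\in H}\sqrt{L(a)^2+\|au-v\|^2}$. A family $\{H_i\}$ of subgroups of $O(V)$ is of finite representation type if there are finitely many subgroups $K_1,\dots,K_n\le O(V)$ such that each $H_i$ equals $\phi^{-1}K_j\phi$ for some $j$ and some $\phi\in O(V)$. *)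

(* Defs.v *)
From Stdlib Require Import Reals List.
From Stdlib Require Fin.
Open Scope R_scope.

(* Every finite-dimensional real normed space is (linearly, isometrically)
   isomorphic to R^n equipped with some norm; we model V as Fin.t n -> R
   together with an arbitrary norm [nrm] on it. *)
Definition Vec (n : nat) := Fin.t n -> R.

Definition vadd {n} (x y : Vec n) : Vec n := fun i => x i + y i.
Definition vsub {n} (x y : Vec n) : Vec n := fun i => x i - y i.
Definition vscal {n} (c : R) (x : Vec n) : Vec n := fun i => c * x i.
Definition vzero {n} : Vec n := fun _ => 0.

Definition is_norm {n} (nrm : Vec n -> R) : Prop :=
  (forall x, 0 <= nrm x) /\
  (forall x, nrm x = 0 -> forall i, x i = 0) /\
  (forall c x, nrm (vscal c x) = Rabs c * nrm x) /\
  (forall x y, nrm (vadd x y) <= nrm x + nrm y).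

Definition is_linear {n} (a : Vec n -> Vec n) : Prop :=
  (forall x y, a (vadd x y) = vadd (a x) (a y)) /\
  (forall c x, a (vscal c x) = vscal c (a x)).

Definition in_O {n} (nrm : Vec n -> R) (a : Vec n -> Vec n) : Prop :=
  is_linear a /\ (forall x, nrm (a x) = nrm x) /\ (forall y, exists x, a x = y).

Definition subgroup_O {n} (nrm : Vec n -> R) (H : (Vec n -> Vec n) -> Prop) : Prop :=
  (forall a, H a -> in_O nrm a) /\
  H (fun x => x) /\
  (forall a b, H a -> H b -> H (fun x => a (b x))) /\
  (forall a, H a -> exists b, H b /\ (forall x, b (a x) = x) /\ (forall x, a (b x) = x)).

Definition group_norm {n} (H : (Vec n -> Vec n) -> Prop) (L : (Vec n -> Vec n) -> R) : Prop :=
  (forall a, H a -> 0 <= L a) /\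
  (forall a, H a -> (L a = 0 <-> forall x, a x = x)) /\
  (forall a b, H a -> H b -> (forall x, b (a x) = x) -> (forall x, a (b x) = x) ->
     L b = L a) /\
  (forall a b, H a -> H b -> L (fun x => a (b x)) <= L a + L b).

Definition holonomic {n} (nrm : Vec n -> R) (H : (Vec n -> Vec n) -> Prop)
    (L : (Vec n -> Vec n) -> R) : Prop :=
  subgroup_O nrm H /\ group_norm H L /\
  (forall u, exists Rad, 0 < Rad /\
     forall a v w, H a -> nrm (vsub u v) < Rad -> nrm (vsub u w) < Rad ->
       nrm (vsub v w) ^ 2 - nrm (vsub (a v) w) ^ 2 <= L a ^ 2).

Definition is_inf (S : R -> Prop) (m : R) : Prop :=
  (forall r, S r -> m <= r) /\ (forall m', (forall r, S r -> m' <= r) -> m' <= m).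

Definition is_holonomic_metric {n} (nrm : Vec n -> R) (H : (Vec n -> Vec n) -> Prop)
    (L : (Vec n -> Vec n) -> R) (d : Vec n -> Vec n -> R) : Prop :=
  forall u v, is_inf (fun r => exists a, H a /\
                 r = sqrt (L a ^ 2 + nrm (vsub (a u) v) ^ 2)) (d u v).

Definition finite_rep_type {n} (nrm : Vec n -> R)
    (H : nat -> (Vec n -> Vec n) -> Prop) : Prop :=
  exists (m : nat) (K : nat -> (Vec n -> Vec n) -> Prop),
    (forall j, (j < m)%nat -> subgroup_O nrm (K j)) /\
    forall i, exists j, (j < m)%nat /\
      exists phi psi, in_O nrm phi /\ (forall x, psi (phi x) = x) /\
        (forall x, phi (psi x) = x) /\
        (forall a, H i a <-> exists k, K j k /\ forall x, a x = psi (k (phi x))).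

Definition is_open {n} (nrm : Vec n -> R) (U : Vec n -> Prop) : Prop :=
  forall x, U x -> exists r, 0 < r /\ forall y, nrm (vsub y x) < r -> U y.

Definition is_compact {n} (nrm : Vec n -> R) (K : Vec n -> Prop) : Prop :=
  forall (I : Type) (U : I -> Vec n -> Prop),
    (forall i, is_open nrm (U i)) ->
    (forall x, K x -> exists i, U i x) ->
    exists l : list I, forall x, K x -> exists i, In i l /\ U i x.

(* d_i -> d uniformly on compact subsets of V x V (equivalently on K x K,
   K compact in V). *)
Definition unif_conv_compact {n} (nrm : Vec n -> R)
    (d : nat -> Vec n -> Vec n -> R) (dinf : Vec n -> Vec n -> R) : Prop :=
  forall K, is_compact nrm K ->
    forall eps, 0 < eps -> exists N, forall i, (N <= i)%nat ->
      forall u v, K u -> K v -> Rabs (d i u v - dinf u v) < eps.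

Definition semi_metric {n} (d : Vec n -> Vec n -> R) : Prop :=
  (forall u v, 0 <= d u v) /\ (forall u, d u u = 0) /\
  (forall u v, d u v = d v u) /\ (forall u v w, d u w <= d u v + d v w).

Definition op_conv {n} (nrm : Vec n -> R) (g : nat -> Vec n -> Vec n)
    (h : Vec n -> Vec n) : Prop :=
  forall eps, 0 < eps -> exists N, forall k, (N <= k)%nat ->
    forall x, nrm (vsub (g k x) (h x)) <= eps * nrm x.

Definition closed_subgroup_O {n} (nrm : Vec n -> R) (G : (Vec n -> Vec n) -> Prop) : Prop :=
  subgroup_O nrm G /\
  (forall g h, (forall k, G (g k)) -> in_O nrm h -> op_conv nrm g h -> G h).

(* Main.v *)
Require Import Defs.
From Stdlib Require Import Reals Lra Lia List Classical ClassicalEpsilon FunctionalExtensionality.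
From Stdlib Require Import Rtopology ZArith.
Open Scope R_scope.

Lemma valadh_step (u : nat -> R) l : ValAdh u l ->
  forall N (k:nat), {p : nat | (N <= p)%nat /\ Rabs (u p - l) < / (INR k + 1)}.
Proof.
  intros Hv N k. apply constructive_indefinite_description.
  assert (Hp : 0 < / (INR k + 1)).
  { apply Rinv_0_lt_compat. pose proof (pos_INR k). lra. }
  destruct (Hv (disc l (mkposreal _ Hp)) N) as [p [Hp1 Hp2]].
  - exists (mkposreal _ Hp). intros y Hy. exact Hy.
  - exists p. split; auto.
Qed.

Lemma sub_ge (s : nat -> nat) : (forall k, (s k < s (S k))%nat) -> forall k, (k <= s k)%nat.
Proof. intros Hs k; induction k; [lia|]. specialize (Hs k); lia. Qed.

Lemma sub_mono (s : nat -> nat) : (forall k, (s k < s (S k))%nat) ->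
  forall a b, (a <= b)%nat -> (s a <= s b)%nat.
Proof. intros Hs a b Hab; induction Hab; [lia|]. specialize (Hs m); lia. Qed.

Lemma sub_strict (s : nat -> nat) : (forall k, (s k < s (S k))%nat) ->
  forall a b, (a < b)%nat -> (s a < s b)%nat.
Proof. intros Hs a b Hab. pose proof (sub_mono s Hs (S a) b Hab). specialize (Hs a). lia. Qed.

Lemma cv_sub (u : nat -> R) l s : (forall k, (s k < s (S k))%nat) ->
  Un_cv u l -> Un_cv (fun k => u (s k)) l.
Proof.
  intros Hs Hu eps He. destruct (Hu eps He) as [N HN]. exists N.
  intros k Hk. apply HN. pose proof (sub_ge s Hs k). lia.
Qed.

Lemma BW1 (u : nat -> R) M : (forall k, Rabs (u k) <= M) ->
  exists s, (forall k, (s k < s (S k))%nat) /\ exists l, Un_cv (fun k => u (s k)) l.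
Proof.
  intros Hb.
  destruct (Bolzano_Weierstrass u (fun c => -M <= c <= M) (compact_P3 _ _)) as [l Hl].
  { intros k. specialize (Hb k). revert Hb. unfold Rabs; destruct Rcase_abs; intros; lra. }
  pose (pick := fun N k => proj1_sig (valadh_step u l Hl N k)).
  assert (Hpick : forall N k, (N <= pick N k)%nat /\ Rabs (u (pick N k) - l) < / (INR k + 1)).
  { intros N k. unfold pick. destruct (valadh_step u l Hl N k); auto. }
  pose (s := fix s k := match k with 0%nat => pick 0%nat 0%nat | S k' => pick (S (s k')) k end).
  exists s. split.
  - intros k. simpl. destruct (Hpick (S (s k)) (S k)). lia.
  - exists l. intros eps He.
    destruct (archimed (/ eps)) as [Ha _].
    assert (Hz : (0 <= up (/ eps))%Z).
    { apply le_IZR. pose proof (Rinv_0_lt_compat _ He). simpl. lra. }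
    exists (Z.to_nat (up (/ eps))). intros k Hk.
    assert (Hsk : Rabs (u (s k) - l) < / (INR k + 1)).
    { destruct k; simpl; apply Hpick. }
    unfold Rdist. eapply Rlt_le_trans; [exact Hsk|].
    assert (INR (Z.to_nat (up (/eps))) <= INR k) by (apply le_INR; lia).
    rewrite INR_IZR_INZ, Z2Nat.id in H by auto.
    assert (/ eps < INR k + 1) by lra.
    apply Rlt_le. rewrite <- (Rinv_inv eps).
    apply Rinv_lt_contravar; [|auto].
    apply Rmult_lt_0_compat; [apply Rinv_0_lt_compat; auto| pose proof (pos_INR k); lra].
Qed.

Lemma BWlist {X} (l : list X) (f : nat -> X -> R) M :
  (forall k x, Rabs (f k x) <= M) ->
  exists s, (forall k, (s k < s (S k))%nat) /\
    forall x, In x l -> exists c, Un_cv (fun k => f (s k) x) c.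
Proof.
  intros Hb. induction l as [|x l IH].
  - exists (fun k => k). split; [intros; lia| intros x []].
  - destruct IH as [s [Hs Hc]].
    destruct (BW1 (fun k => f (s k) x) M) as [t [Ht [c Hcv]]]; [intros; apply Hb|].
    exists (fun k => s (t k)). split.
    + intros k. apply (sub_strict s Hs). apply Ht.
    + intros y [<-|Hy]; [exists c; exact Hcv|].
      destruct (Hc y Hy) as [c' Hc']. exists c'.
      exact (cv_sub (fun k => f (s k) y) c' t Ht Hc').
Qed.
Fixpoint fsum (n:nat) : (Fin.t n -> R) -> R :=
  match n with O => fun _ => 0 | S m => fun f => f Fin.F1 + fsum m (fun i => f (Fin.FS i)) end.

Definition ebas {n} (j : Fin.t n) : Vec n := fun i => if Fin.eq_dec j i then 1 else 0.

Lemma fsum_ext n f g : (forall j, f j = g j) -> fsum n f = fsum n g.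
Proof. revert f g; induction n; intros f g H; simpl; auto. rewrite H. f_equal. apply IHn; auto. Qed.

Lemma fsum_plus n f g : fsum n (fun j => f j + g j) = fsum n f + fsum n g.
Proof. revert f g; induction n; intros f g; simpl; [lra|]. rewrite IHn. lra. Qed.

Lemma fsum_scal n c f : fsum n (fun j => c * f j) = c * fsum n f.
Proof. revert f; induction n; intros f; simpl; [lra|]. rewrite IHn. lra. Qed.

Lemma fsum_le n f g : (forall j, f j <= g j) -> fsum n f <= fsum n g.
Proof. revert f g; induction n; intros f g H; simpl; [lra|]. pose proof (H Fin.F1).
  pose proof (IHn (fun i => f (Fin.FS i)) (fun i => g (Fin.FS i)) (fun i => H _)). lra. Qed.

Lemma fsum_abs n f : Rabs (fsum n f) <= fsum n (fun j => Rabs (f j)).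
Proof. revert f; induction n; intros f; simpl. rewrite Rabs_R0; lra.
  eapply Rle_trans; [apply Rabs_triang|]. pose proof (IHn (fun i => f (Fin.FS i))). lra. Qed.

Lemma fsum_0 n : fsum n (fun _ => 0) = 0.
Proof. induction n; simpl; auto. rewrite IHn; lra. Qed.

Lemma fsum_nonneg n f : (forall j, 0 <= f j) -> 0 <= fsum n f.
Proof. intros H. rewrite <- (fsum_0 n). apply fsum_le; auto. Qed.

Lemma fsum_term n f j : (forall j, 0 <= f j) -> f j <= fsum n f.
Proof.
  revert f j; induction n; intros f j H. inversion j.
  simpl. apply (Fin.caseS' j).
  - pose proof (fsum_nonneg n (fun i => f (Fin.FS i)) (fun _ => H _)). lra.
  - intros p. pose proof (IHn (fun i => f (Fin.FS i)) p (fun _ => H _)). pose proof (H Fin.F1). simpl in *. lra.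
Qed.

Lemma decomp n (x : Vec n) i : x i = fsum n (fun j => x j * ebas j i).
Proof.
  revert x i; induction n; intros x i. inversion i.
  simpl. apply (Fin.caseS' i).
  - unfold ebas at 1. destruct (Fin.eq_dec Fin.F1 Fin.F1) as [_|C]; [|congruence].
    rewrite (fsum_ext _ _ (fun _ => 0)). 
    + rewrite fsum_0; lra.
    + intros j. unfold ebas. destruct Fin.eq_dec as [e|]; [discriminate e|lra].
  - intros p. unfold ebas at 1. destruct (Fin.eq_dec Fin.F1 (Fin.FS p)) as [e|_]; [discriminate e|].
    rewrite (IHn (fun i => x (Fin.FS i)) p). rewrite Rmult_0_r, Rplus_0_l.
    apply fsum_ext. intros j. f_equal. unfold ebas.
    destruct (Fin.eq_dec j p), (Fin.eq_dec (Fin.FS j) (Fin.FS p)); subst; auto.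
    + congruence.
    + apply Fin.FS_inj in e. congruence.
Qed.

Definition vsum {n m} (f : Fin.t n -> Vec m) : Vec m := fun i => fsum n (fun j => f j i).

Lemma lin_zero {n} (a : Vec n -> Vec n) : is_linear a -> a vzero = vzero.
Proof.
  intros [_ Hs]. replace (@vzero n) with (vscal 0 (@vzero n)).
  rewrite Hs. apply functional_extensionality; intros; unfold vscal, vzero; lra.
  apply functional_extensionality; intros; unfold vscal, vzero; lra.
Qed.

Lemma lin_vsum {n m} (a : Vec n -> Vec n) (f : Fin.t m -> Vec n) : is_linear a ->
  a (vsum f) = vsum (fun j => a (f j)).
Proof.
  intros Ha. revert f; induction m; intros f.
  - replace (vsum f) with (@vzero n). rewrite lin_zero by auto. reflexivity.
    reflexivity.
  - replace (vsum f) with (vadd (f Fin.F1) (vsum (fun j => f (Fin.FS j)))) by reflexivity.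
    destruct Ha as [Hadd Hs]. rewrite Hadd. rewrite IHm. reflexivity.
Qed.

Lemma decompV n (x : Vec n) : x = vsum (fun j => vscal (x j) (ebas j)).
Proof. apply functional_extensionality; intros i. unfold vsum, vscal. apply decomp. Qed.

Lemma lin_decomp n (a : Vec n -> Vec n) x i : is_linear a ->
  a x i = fsum n (fun j => x j * a (ebas j) i).
Proof.
  intros Ha. rewrite (decompV n x) at 1. rewrite lin_vsum by auto. unfold vsum.
  apply fsum_ext. intros j. destruct Ha as [_ Hs]. rewrite Hs. reflexivity.
Qed.

Lemma nrm_zero n (nrm : Vec n -> R) : is_norm nrm -> nrm vzero = 0.
Proof.
  intros [H0 [_ [Hs _]]]. replace (@vzero n) with (vscal 0 (@vzero n)).
  rewrite Hs, Rabs_R0; lra.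
  apply functional_extensionality; intros; unfold vscal, vzero; lra.
Qed.

Lemma nrm_vsum n m (nrm : Vec n -> R) (f : Fin.t m -> Vec n) : is_norm nrm ->
  nrm (vsum f) <= fsum m (fun j => nrm (f j)).
Proof.
  intros Hn. revert f; induction m; intros f.
  - simpl. replace (vsum f) with (@vzero n) by reflexivity. rewrite nrm_zero; auto; lra.
  - replace (vsum f) with (vadd (f Fin.F1) (vsum (fun j => f (Fin.FS j)))) by reflexivity.
    simpl. eapply Rle_trans; [apply Hn|]. pose proof (IHm (fun j => f (Fin.FS j))). lra.
Qed.

Lemma nrm_upper n (nrm : Vec n -> R) x : is_norm nrm ->
  nrm x <= fsum n (fun j => Rabs (x j) * nrm (ebas j)).
Proof.
  intros Hn. rewrite (decompV n x) at 1. eapply Rle_trans; [apply nrm_vsum; auto|].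
  apply fsum_le. intros j. destruct Hn as [_ [_ [Hs _]]]. rewrite Hs. lra.
Qed.
Lemma cv_const c : Un_cv (fun _ => c) c.
Proof. intros e He. exists 0%nat. intros. unfold Rdist. rewrite Rminus_diag, Rabs_R0. auto. Qed.

Lemma cv_inv : Un_cv (fun k => / (INR k + 1)) 0.
Proof.
  intros eps He.
  destruct (archimed (/ eps)) as [Ha _].
  assert (Hz : (0 <= up (/ eps))%Z).
  { apply le_IZR. pose proof (Rinv_0_lt_compat _ He). simpl. lra. }
  exists (Z.to_nat (up (/ eps))). intros k Hk.
  unfold Rdist. rewrite Rminus_0_r.
  assert (Hp : 0 < INR k + 1) by (pose proof (pos_INR k); lra).
  rewrite Rabs_pos_eq by (left; apply Rinv_0_lt_compat; auto).
  assert (INR (Z.to_nat (up (/eps))) <= INR k) by (apply le_INR; lia).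
  rewrite INR_IZR_INZ, Z2Nat.id in H by auto.
  assert (/ eps < INR k + 1) by lra.
  rewrite <- (Rinv_inv eps).
  apply Rinv_lt_contravar; [|auto].
  apply Rmult_lt_0_compat; [apply Rinv_0_lt_compat; auto| lra].
Qed.

Lemma cv_abs u l : Un_cv u l -> Un_cv (fun k => Rabs (u k)) (Rabs l).
Proof.
  intros H e He. destruct (H e He) as [N HN]. exists N. intros k Hk.
  unfold Rdist. eapply Rle_lt_trans; [apply Rabs_triang_inv2|]. apply HN; auto.
Qed.

Lemma cv_fsum n (f : nat -> Fin.t n -> R) c :
  (forall j, Un_cv (fun k => f k j) (c j)) -> Un_cv (fun k => fsum n (f k)) (fsum n c).
Proof.
  revert f c; induction n; intros f c H; simpl.
  - apply cv_const.
  - apply CV_plus; [apply H|]. apply (IHn (fun k i => f k (Fin.FS i))). intros; apply H.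
Qed.

Lemma cv_squeeze u v : (forall k, 0 <= u k <= v k) -> Un_cv v 0 -> Un_cv u 0.
Proof.
  intros H Hv e He. destruct (Hv e He) as [N HN]. exists N. intros k Hk.
  specialize (HN k Hk). specialize (H k). unfold Rdist in *. rewrite Rminus_0_r in *.
  rewrite Rabs_pos_eq in * by lra. lra.
Qed.

Fixpoint fin_all n : list (Fin.t n) :=
  match n with O => nil | S m => Fin.F1 :: map Fin.FS (fin_all m) end.

Lemma fin_all_in n (j : Fin.t n) : In j (fin_all n).
Proof.
  induction n. inversion j. apply (Fin.caseS' j); simpl; auto.
  intros p. right. apply in_map. auto.
Qed.

Lemma BWfull {X} (l : list X) (Hl : forall x, In x l) (f : nat -> X -> R) M :
  (forall k x, Rabs (f k x) <= M) ->
  exists s, (forall k, (s k < s (S k))%nat) /\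
    exists c : X -> R, forall x, Un_cv (fun k => f (s k) x) (c x).
Proof.
  intros Hb. destruct (BWlist l f M Hb) as [s [Hs Hc]]. exists s; split; auto.
  exists (fun x => proj1_sig (constructive_indefinite_description _ (Hc x (Hl x)))).
  intros x. destruct constructive_indefinite_description; auto.
Qed.

Lemma vsub_split n (c y : Vec n) : c = vadd y (vsub c y).
Proof. apply functional_extensionality; intros i; unfold vadd, vsub; lra. Qed.

Lemma nrm_lower n (nrm : Vec n -> R) : is_norm nrm ->
  exists c, 0 < c /\ forall x, c * fsum n (fun j => Rabs (x j)) <= nrm x.
Proof.
  intros Hn. apply NNPP. intros Hc.
  assert (Hneg : forall k:nat, exists x, nrm x < / (INR k + 1) * fsum n (fun j => Rabs (x j))).
  { intros k. apply NNPP; intros Hk. apply Hc. exists (/ (INR k + 1)). split.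
    - apply Rinv_0_lt_compat. pose proof (pos_INR k); lra.
    - intros x. apply Rnot_lt_le. intros Hlt. apply Hk. exists x. auto. }
  pose (xs := fun k => proj1_sig (constructive_indefinite_description _ (Hneg k))).
  assert (Hxs : forall k, nrm (xs k) < / (INR k + 1) * fsum n (fun j => Rabs (xs k j))).
  { intros k. unfold xs. destruct constructive_indefinite_description; auto. }
  pose (sx := fun k => fsum n (fun j => Rabs (xs k j))).
  assert (Hsx : forall k, 0 < sx k).
  { intros k. specialize (Hxs k). pose proof (proj1 Hn (xs k)).
    assert (0 < / (INR k + 1)) by (apply Rinv_0_lt_compat; pose proof (pos_INR k); lra).
    fold (sx k) in Hxs. destruct (Rle_or_lt (sx k) 0); auto.
    pose proof (Rmult_le_compat_l _ _ _ (Rlt_le _ _ H0) H1). lra. }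
  pose (y := fun k => vscal (/ sx k) (xs k)).
  assert (Hy1 : forall k, fsum n (fun j => Rabs (y k j)) = 1).
  { intros k. unfold y, vscal. rewrite (fsum_ext _ _ (fun j => / sx k * Rabs (xs k j))).
    rewrite fsum_scal. fold (sx k). field. specialize (Hsx k); lra.
    intros j. rewrite Rabs_mult, (Rabs_pos_eq (/ sx k)); auto.
    left; apply Rinv_0_lt_compat; auto. }
  assert (Hy2 : forall k, nrm (y k) <= / (INR k + 1)).
  { intros k. unfold y. destruct Hn as [_ [_ [Hs _]]]. rewrite Hs.
    rewrite Rabs_pos_eq by (left; apply Rinv_0_lt_compat; auto).
    specialize (Hxs k). fold (sx k) in Hxs. specialize (Hsx k).
    apply Rmult_le_reg_l with (sx k); auto. rewrite <- Rmult_assoc, Rinv_r by lra.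
    lra. }
  assert (Hyb : forall k j, Rabs (y k j) <= 1).
  { intros k j. rewrite <- (Hy1 k). apply (fsum_term n (fun j => Rabs (y k j))).
    intros; apply Rabs_pos. }
  destruct (BWfull (fin_all n) (fin_all_in n) y 1 Hyb) as [s [Hs [c Hcv]]].
  assert (HS : fsum n (fun j => Rabs (c j)) = 1).
  { apply (UL_sequence (fun k => fsum n (fun j => Rabs (y (s k) j)))).
    - apply cv_fsum. intros j. apply cv_abs. apply Hcv.
    - rewrite (functional_extensionality _ (fun _ => 1)) by (intros; apply Hy1). apply cv_const. }
  assert (Hc0 : nrm c <= 0).
  { pose (w := fun k => / (INR k + 1) + fsum n (fun j => Rabs (c j - y (s k) j) * nrm (ebas j))).
    apply (@Rle_cv_lim (fun _ => nrm c) w); [| apply cv_const |].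
    - intros k. unfold w. rewrite (vsub_split n c (y (s k))) at 1.
      eapply Rle_trans; [apply Hn|]. apply Rplus_le_compat.
      + eapply Rle_trans; [apply Hy2|]. apply Rinv_le_contravar.
        pose proof (pos_INR k); lra. apply Rplus_le_compat_r, le_INR, sub_ge; auto.
      + apply nrm_upper; auto.
    - replace 0 with (0 + fsum n (fun j => Rabs (c j - c j) * nrm (ebas j))).
      unfold w. apply CV_plus. apply cv_inv. apply cv_fsum. intros j.
      apply CV_mult; [|apply cv_const]. apply cv_abs. apply CV_minus; [apply cv_const| apply Hcv].
      rewrite (fsum_ext _ _ (fun _ => 0)), fsum_0. lra. intros; rewrite Rminus_diag, Rabs_R0; lra. }
  assert (nrm c = 0) by (pose proof (proj1 Hn c); lra).
  destruct Hn as [_ [Hz _]]. specialize (Hz c H).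
  rewrite (fsum_ext _ _ (fun _ => 0)), fsum_0 in HS. lra. intros; rewrite Hz, Rabs_R0; auto.
Qed.
Lemma coord_bound n (nrm : Vec n -> R) c0 : 0 < c0 ->
  (forall x, c0 * fsum n (fun j => Rabs (x j)) <= nrm x) ->
  forall y i, Rabs (y i) <= nrm y / c0.
Proof.
  intros Hc H y i. apply Rmult_le_reg_l with c0; auto.
  replace (c0 * (nrm y / c0)) with (nrm y) by (field; lra).
  eapply Rle_trans; [|apply H]. apply Rmult_le_compat_l; [lra|].
  apply (fsum_term n (fun j => Rabs (y j))). intros; apply Rabs_pos.
Qed.

Lemma vsub_opp n (nrm : Vec n -> R) y z : is_norm nrm -> nrm (vsub y z) = nrm (vsub z y).
Proof.
  intros Hn. replace (vsub y z) with (vscal (-1) (vsub z y)).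
  destruct Hn as [_ [_ [Hs _]]]. rewrite Hs. replace (Rabs (-1)) with 1. lra. rewrite Rabs_left; lra.
  apply functional_extensionality; intros; unfold vscal, vsub; lra.
Qed.

Lemma nrm_diff n (nrm : Vec n -> R) y z : is_norm nrm -> Rabs (nrm y - nrm z) <= nrm (vsub y z).
Proof.
  intros Hn. pose proof (vsub_opp n nrm y z Hn).
  pose proof (proj2 (proj2 (proj2 Hn)) z (vsub y z)).
  pose proof (proj2 (proj2 (proj2 Hn)) y (vsub z y)).
  rewrite <- vsub_split in H0. rewrite <- vsub_split in H1.
  unfold Rabs; destruct Rcase_abs; lra.
Qed.

Lemma nrm_conv n (nrm : Vec n -> R) (y : nat -> Vec n) z : is_norm nrm ->
  (forall i, Un_cv (fun k => y k i) (z i)) -> Un_cv (fun k => nrm (vsub (y k) z)) 0.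
Proof.
  intros Hn H. apply cv_squeeze with (fun k => fsum n (fun j => Rabs (vsub (y k) z j) * nrm (ebas j))).
  - intros k. split; [apply Hn| apply nrm_upper; auto].
  - replace 0 with (fsum n (fun j => Rabs (z j - z j) * nrm (ebas j))).
    apply cv_fsum. intros j. apply CV_mult; [|apply cv_const]. apply cv_abs.
    unfold vsub. apply CV_minus; [apply H|apply cv_const].
    rewrite (fsum_ext _ _ (fun _ => 0)), fsum_0. lra. intros; rewrite Rminus_diag, Rabs_R0; lra.
Qed.

Lemma coord_conv n (nrm : Vec n -> R) c0 (y : nat -> Vec n) z : 0 < c0 ->
  (forall x, c0 * fsum n (fun j => Rabs (x j)) <= nrm x) ->
  Un_cv (fun k => nrm (vsub (y k) z)) 0 -> forall i, Un_cv (fun k => y k i) (z i).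
Proof.
  intros Hc Hl H i e He. destruct (H (e * c0)) as [N HN]. apply Rmult_lt_0_compat; auto.
  exists N. intros k Hk. specialize (HN k Hk). unfold Rdist in *. rewrite Rminus_0_r in HN.
  pose proof (coord_bound n nrm c0 Hc Hl (vsub (y k) z) i). change (vsub (y k) z i) with (y k i - z i) in H0.
  pose proof (Rle_abs (nrm (vsub (y k) z))).
  eapply Rle_lt_trans; [exact H0|]. apply Rmult_lt_reg_r with c0; auto.
  unfold Rdiv. rewrite Rmult_assoc, Rinv_l, Rmult_1_r by lra. unfold Rdist. lra.
Qed.

Definition limmap {n} (C : Fin.t n -> Fin.t n -> R) (x : Vec n) : Vec n :=
  fun i => fsum n (fun j => x j * C j i).

Lemma limmap_linear n C : is_linear (@limmap n C).
Proof.
  split.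
  - intros x y. apply functional_extensionality; intros i. unfold limmap, vadd.
    rewrite <- fsum_plus. apply fsum_ext; intros; lra.
  - intros c x. apply functional_extensionality; intros i. unfold limmap, vscal.
    rewrite <- fsum_scal. apply fsum_ext; intros; lra.
Qed.

Lemma limmap_conv n (A : nat -> Vec n -> Vec n) C :
  (forall k, is_linear (A k)) ->
  (forall j i, Un_cv (fun k => A k (ebas j) i) (C j i)) ->
  forall x i, Un_cv (fun k => A k x i) (limmap C x i).
Proof.
  intros Hl HC x i. unfold limmap.
  rewrite (functional_extensionality (fun k => A k x i) (fun k => fsum n (fun j => x j * A k (ebas j) i)))
    by (intros k; apply lin_decomp; auto).
  apply cv_fsum. intros j. apply CV_mult; [apply cv_const| apply HC].
Qed.

Lemma limmap_norm n (nrm : Vec n -> R) (A : nat -> Vec n -> Vec n) C : is_norm nrm ->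
  (forall k x, nrm (A k x) = nrm x) ->
  (forall x i, Un_cv (fun k => A k x i) (limmap C x i)) ->
  forall x, nrm (limmap C x) = nrm x.
Proof.
  intros Hn Hi Hc x. apply (UL_sequence (fun k => nrm (A k x))).
  - intros e He. destruct (nrm_conv n nrm (fun k => A k x) (limmap C x) Hn (Hc x) e He) as [N HN].
    exists N. intros k Hk. specialize (HN k Hk). unfold Rdist in *. rewrite Rminus_0_r in HN.
    eapply Rle_lt_trans; [apply nrm_diff; auto|]. eapply Rle_lt_trans; [apply Rle_abs| exact HN].
  - rewrite (functional_extensionality (fun k => nrm (A k x)) (fun _ => nrm x)) by (intros; apply Hi). apply cv_const.
Qed.

Lemma comp_conv n (nrm : Vec n -> R) c0 (B : nat -> Vec n -> Vec n) Bl (y : nat -> Vec n) z :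
  is_norm nrm -> 0 < c0 -> (forall x, c0 * fsum n (fun j => Rabs (x j)) <= nrm x) ->
  (forall k, is_linear (B k)) -> (forall k x, nrm (B k x) = nrm x) ->
  (forall x i, Un_cv (fun k => B k x i) (Bl x i)) ->
  (forall i, Un_cv (fun k => y k i) (z i)) ->
  forall i, Un_cv (fun k => B k (y k) i) (Bl z i).
Proof.
  intros Hn Hc Hlow Hl Hi HB Hy i.
  assert (E : forall k, B k (y k) i = B k (vsub (y k) z) i + B k z i).
  { intros k. assert (y k = vadd (vsub (y k) z) z) as Ey.
    { apply functional_extensionality; intros; unfold vadd, vsub; lra. }
    rewrite Ey at 1. destruct (Hl k) as [Ha _]. rewrite Ha. reflexivity. }
  rewrite (functional_extensionality _ _ E). replace (Bl z i) with (0 + Bl z i) by lra.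
  apply CV_plus; [|apply HB].
  apply (coord_conv n nrm c0 (fun k => B k (vsub (y k) z)) vzero Hc Hlow).
  replace (fun k => nrm (vsub (B k (vsub (y k) z)) vzero)) with (fun k => nrm (vsub (y k) z)).
  apply nrm_conv; auto.
  apply functional_extensionality; intros k. rewrite <- (Hi k (vsub (y k) z)). f_equal.
  apply functional_extensionality; intros; unfold vsub, vzero; lra.
Qed.
Lemma pw_conv n (nrm : Vec n -> R) d dinf : unif_conv_compact nrm d dinf ->
  forall u v, Un_cv (fun i => d i u v) (dinf u v).
Proof.
  intros Hc u v e He.
  destruct (Hc (fun x => x = u \/ x = v)) with (eps := e) as [N HN]; auto.
  - intros I U _ Hcov. destruct (Hcov u (or_introl eq_refl)) as [iu Hu].
    destruct (Hcov v (or_intror eq_refl)) as [iv Hv].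
    exists (iu :: iv :: nil). intros x [->| ->]; [exists iu | exists iv]; simpl; auto.
  - exists N. intros i Hi. apply HN; auto.
Qed.

Lemma sqrt_sq_le a b : 0 <= a -> 0 <= b -> sqrt (a ^ 2 + b ^ 2) <= a + b.
Proof.
  intros Ha Hb. rewrite <- (sqrt_pow2 (a + b)) by lra. apply sqrt_le_1_alt. nra.
Qed.

Lemma sqrt_sq_ge a b : 0 <= a -> a <= sqrt (a ^ 2 + b ^ 2).
Proof.
  intros Ha. rewrite <- (sqrt_pow2 a) at 1 by lra. apply sqrt_le_1_alt. nra.
Qed.

Lemma d_le n (nrm : Vec n -> R) Hs Ls d : is_norm nrm -> holonomic nrm Hs Ls ->
  is_holonomic_metric nrm Hs Ls d -> forall y z, d y z <= nrm (vsub y z).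
Proof.
  intros Hn [[_ [Hid _]] [[_ [HL0 _]] _]] Hm y z.
  destruct (Hm y z) as [Hlow _]. apply Hlow. exists (fun x => x). split; auto.
  assert (Ls (fun x => x) = 0) as -> by (apply HL0; auto).
  rewrite <- (sqrt_pow2 (nrm (vsub y z))) at 1 by apply Hn. f_equal. simpl. ring.
Qed.

Lemma lin_vsub {n} (a : Vec n -> Vec n) x y : is_linear a -> a (vsub x y) = vsub (a x) (a y).
Proof.
  intros [Ha Hs]. replace (vsub x y) with (vadd x (vscal (-1) y)).
  rewrite Ha, Hs. apply functional_extensionality; intros; unfold vadd, vsub, vscal; lra.
  apply functional_extensionality; intros; unfold vadd, vsub, vscal; lra.
Qed.

Lemma inO_inj n (nrm : Vec n -> R) a : is_norm nrm -> in_O nrm a -> forall x y, a x = a y -> x = y.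
Proof.
  intros Hn [Hl [Hi _]] x y E. assert (nrm (vsub x y) = 0).
  { rewrite <- Hi, lin_vsub, E by auto. replace (vsub (a y) (a y)) with (@vzero n).
    apply nrm_zero; auto. apply functional_extensionality; intros; unfold vsub, vzero; lra. }
  destruct Hn as [_ [Hz _]]. apply functional_extensionality; intros i.
  specialize (Hz _ H i). unfold vsub in Hz. lra.
Qed.
Lemma inO_id n (nrm : Vec n -> R) : in_O nrm (fun x => x).
Proof. split; [split; auto|split; auto]. intros y; exists y; auto. Qed.

Lemma inO_comp n (nrm : Vec n -> R) a b : in_O nrm a -> in_O nrm b -> in_O nrm (fun x => a (b x)).
Proof.
  intros [[Ha1 Ha2] [Hai Has]] [[Hb1 Hb2] [Hbi Hbs]]. split; [split|split].
  - intros x y. rewrite Hb1, Ha1. auto.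
  - intros c x. rewrite Hb2, Ha2. auto.
  - intros x. rewrite Hai; auto.
  - intros y. destruct (Has y) as [x1 <-]. destruct (Hbs x1) as [x <-]. exists x; auto.
Qed.

Lemma inO_inv n (nrm : Vec n -> R) g : is_norm nrm -> in_O nrm g ->
  exists b, in_O nrm b /\ (forall x, b (g x) = x) /\ (forall x, g (b x) = x).
Proof.
  intros Hn Hg. pose proof Hg as [[Hg1 Hg2] [Hgi Hgs]].
  pose (b := fun y => proj1_sig (constructive_indefinite_description _ (Hgs y))).
  assert (Hb : forall y, g (b y) = y).
  { intros y. unfold b. destruct constructive_indefinite_description; auto. }
  pose proof (inO_inj n nrm g Hn Hg) as Hinj.
  assert (Hb2 : forall x, b (g x) = x) by (intros x; apply Hinj; rewrite Hb; auto).
  exists b. split; [|split; auto]. split; [split|split].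
  - intros x y. apply Hinj. rewrite Hg1, !Hb. auto.
  - intros c x. apply Hinj. rewrite Hg2, !Hb. auto.
  - intros x. rewrite <- (Hgi (b x)), Hb. auto.
  - intros y. exists (g y). auto.
Qed.
Lemma hard n (nrm : Vec n -> R)
  (H : nat -> (Vec n -> Vec n) -> Prop) (L : nat -> (Vec n -> Vec n) -> R)
  (d : nat -> Vec n -> Vec n -> R) (dinf : Vec n -> Vec n -> R) :
  is_norm nrm ->
  (forall i, holonomic nrm (H i) (L i)) ->
  (forall i, is_holonomic_metric nrm (H i) (L i) (d i)) ->
  (forall u v, Un_cv (fun i => d i u v) (dinf u v)) ->
  forall u v, dinf u v = 0 ->
  exists g, in_O nrm g /\ (forall x, dinf x (g x) <= 0) /\ v = g u.
Proof.
  intros Hn Hhol Hmet Hpw u v Huv.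
  assert (Happ : forall i, exists a, H i a /\
     sqrt (L i a ^ 2 + nrm (vsub (a u) v) ^ 2) < d i u v + / (INR i + 1)).
  { intros i. apply NNPP; intros Hno.
    destruct (Hmet i u v) as [_ Hgl].
    assert (He : 0 < / (INR i + 1)) by (apply Rinv_0_lt_compat; pose proof (pos_INR i); lra).
    assert (d i u v + / (INR i + 1) <= d i u v); [|lra].
    apply Hgl. intros r [a [Ha ->]]. apply Rnot_lt_le. intros Hlt. apply Hno. exists a; auto. }
  pose (as_ := fun i => proj1_sig (constructive_indefinite_description _ (Happ i))).
  assert (Has : forall i, H i (as_ i) /\
     sqrt (L i (as_ i) ^ 2 + nrm (vsub (as_ i u) v) ^ 2) < d i u v + / (INR i + 1)).
  { intros i. unfold as_. destruct constructive_indefinite_description; auto. }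
  assert (Hinv : forall i, exists b, H i b /\ (forall x, b (as_ i x) = x) /\ (forall x, as_ i (b x) = x)).
  { intros i. destruct (Hhol i) as [[_ [_ [_ Hi]]] _]. apply Hi, Has. }
  pose (bs := fun i => proj1_sig (constructive_indefinite_description _ (Hinv i))).
  assert (Hbs : forall i, H i (bs i) /\ (forall x, bs i (as_ i x) = x) /\ (forall x, as_ i (bs i x) = x)).
  { intros i. unfold bs. destruct constructive_indefinite_description; auto. }
  assert (HaO : forall i, in_O nrm (as_ i)).
  { intros i. destruct (Hhol i) as [[Hi _] _]. apply Hi, Has. }
  assert (HbO : forall i, in_O nrm (bs i)).
  { intros i. destruct (Hhol i) as [[Hi _] _]. apply Hi, Hbs. }
  pose (t := fun i => d i u v + / (INR i + 1)).
  assert (Ht : Un_cv t 0).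
  { replace 0 with (dinf u v + 0) by lra. apply CV_plus; [apply Hpw| apply cv_inv]. }
  assert (HLa : forall i, 0 <= L i (as_ i) <= t i).
  { intros i. destruct (Hhol i) as [_ [[HL _] _]]. pose proof (HL _ (proj1 (Has i))).
    split; auto. pose proof (sqrt_sq_ge (L i (as_ i)) (nrm (vsub (as_ i u) v)) H0).
    pose proof (proj2 (Has i)). unfold t. lra. }
  assert (Hua : forall i, 0 <= nrm (vsub (as_ i u) v) <= t i).
  { intros i. pose proof (proj1 Hn (vsub (as_ i u) v)). split; auto.
    pose proof (sqrt_sq_ge (nrm (vsub (as_ i u) v)) (L i (as_ i)) H0).
    rewrite Rplus_comm in H1.
    pose proof (proj2 (Has i)). unfold t. lra. }
  destruct (nrm_lower n nrm Hn) as [c0 [Hc0 Hlow]].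
  pose (Mx := fsum n (fun j => nrm (ebas j))).
  pose (f := fun k (p : bool * (Fin.t n * Fin.t n)) =>
     let '(b, (j, i)) := p in (if b then as_ k else bs k) (ebas j) i).
  assert (Hfb : forall k p, Rabs (f k p) <= Mx / c0).
  { intros k [b [j i]]. simpl.
    eapply Rle_trans; [apply (coord_bound n nrm c0 Hc0 Hlow)|].
    unfold Rdiv. apply Rmult_le_compat_r; [left; apply Rinv_0_lt_compat; auto|].
    destruct b; [rewrite (proj1 (proj2 (HaO k)))| rewrite (proj1 (proj2 (HbO k)))];
      apply (fsum_term n (fun j => nrm (ebas j))); intros; apply Hn. }
  destruct (BWfull (list_prod (true :: false :: nil) (list_prod (fin_all n) (fin_all n)))
    ltac:(intros [b [j i]]; apply in_prod; [destruct b; simpl; auto| apply in_prod; apply fin_all_in])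
    f _ Hfb) as [s [Hs [cf Hcf]]].
  pose (g := limmap (fun j i => cf (true, (j, i)))).
  pose (h := limmap (fun j i => cf (false, (j, i)))).
  pose (A := fun k => as_ (s k)). pose (B := fun k => bs (s k)).
  assert (HA : forall x i, Un_cv (fun k => A k x i) (g x i)).
  { apply limmap_conv. intros k; apply HaO. intros j i. exact (Hcf (true, (j, i))). }
  assert (HB : forall x i, Un_cv (fun k => B k x i) (h x i)).
  { apply limmap_conv. intros k; apply HbO. intros j i. exact (Hcf (false, (j, i))). }
  assert (HgN : forall x, nrm (g x) = nrm x).
  { apply (limmap_norm n nrm A); auto. intros k x; apply HaO. }
  assert (HhN : forall x, nrm (h x) = nrm x).
  { apply (limmap_norm n nrm B); auto. intros k x; apply HbO. }
  assert (Hhg : forall x, h (g x) = x).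
  { intros x. apply functional_extensionality; intros i.
    apply (UL_sequence (fun k => B k (A k x) i)).
    - apply (comp_conv n nrm c0 B h (fun k => A k x) (g x)); auto.
      intros k; apply HbO. intros k y; apply HbO.
    - unfold A, B. rewrite (functional_extensionality (fun k => bs (s k) (as_ (s k) x) i) (fun _ => x i)).
      apply cv_const. intros k. rewrite (proj1 (proj2 (Hbs (s k)))). auto. }
  assert (Hgh : forall x, g (h x) = x).
  { intros x. apply functional_extensionality; intros i.
    apply (UL_sequence (fun k => A k (B k x) i)).
    - apply (comp_conv n nrm c0 A g (fun k => B k x) (h x)); auto.
      intros k; apply HaO. intros k y; apply HaO.
    - unfold A, B. rewrite (functional_extensionality (fun k => as_ (s k) (bs (s k) x) i) (fun _ => x i)).
      apply cv_const. intros k. rewrite (proj2 (proj2 (Hbs (s k)))). auto. }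
  exists g. split; [|split].
  - split; [apply limmap_linear| split; auto]. intros y; exists (h y); auto.
  - intros x.
    apply (@Rle_cv_lim (fun k => d (s k) x (g x))
             (fun k => L (s k) (A k) + nrm (vsub (A k x) (g x)))).
    + intros k. eapply Rle_trans; [|apply sqrt_sq_le].
      * destruct (Hmet (s k) x (g x)) as [Hlb _]. apply Hlb. exists (A k). split; auto. apply Has.
      * apply HLa.
      * apply Hn.
    + apply (cv_sub (fun i => d i x (g x))); auto.
    + replace 0 with (0 + 0) by lra. apply CV_plus.
      * apply (cv_squeeze _ (fun k => t (s k))). intros k; apply HLa. apply (cv_sub t); auto.
      * apply nrm_conv; auto.
  - apply functional_extensionality; intros i.
    apply (UL_sequence (fun k => A k u i)).
    + apply (coord_conv n nrm c0 (fun k => A k u) v Hc0 Hlow).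
      apply (cv_squeeze _ (fun k => t (s k))). intros k; apply Hua. apply (cv_sub t); auto.
    + apply HA.
Qed.
Theorem mainTheorem15 (n : nat) (nrm : Vec n -> R)
  (H : nat -> (Vec n -> Vec n) -> Prop) (L : nat -> (Vec n -> Vec n) -> R)
  (d : nat -> Vec n -> Vec n -> R) (dinf : Vec n -> Vec n -> R) :
  is_norm nrm ->
  (forall i, holonomic nrm (H i) (L i)) ->
  (forall i, is_holonomic_metric nrm (H i) (L i) (d i)) ->
  finite_rep_type nrm H ->
  semi_metric dinf ->
  unif_conv_compact nrm d dinf ->
  exists G, closed_subgroup_O nrm G /\
    forall u v, dinf u v = 0 <-> exists g, G g /\ v = g u.
Proof.
  intros Hn Hhol Hmet _ Hsm Hconv.
  destruct Hsm as [Hd0 [Hdd [Hdsym Hdtri]]].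
  pose proof (pw_conv n nrm d dinf Hconv) as Hpw.
  assert (Hdle : forall y z, dinf y z <= nrm (vsub y z)).
  { intros y z. apply (@Rle_cv_lim (fun i => d i y z) (fun _ => nrm (vsub y z))); auto.
    - intros i. apply (d_le n nrm (H i) (L i)); auto.
    - apply cv_const. }
  exists (fun g => in_O nrm g /\ forall x, dinf x (g x) = 0).
  split; [split; [split; [|split; [|split]]|]|].
  - intros a [Ha _]; auto.
  - split; [apply inO_id|auto].
  - intros a b [Ha Ha0] [Hb Hb0]. split; [apply inO_comp; auto|].
    intros x. pose proof (Hdtri x (b x) (a (b x))). rewrite Hb0, Ha0 in H0.
    pose proof (Hd0 x (a (b x))). lra.
  - intros a [Ha Ha0]. destruct (inO_inv n nrm a Hn Ha) as [b [Hb [Hba Hab]]].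
    exists b. split; [split; auto|split; auto].
    intros x. rewrite <- (Hab x) at 1. rewrite Hdsym. apply Ha0.
  - intros g h Hg Hh Hc. split; auto. intros x.
    apply Rle_antisym; [|apply Hd0].
    apply Rnot_lt_le. intros Hpos.
    assert (He : 0 < dinf x (h x) / (nrm x + 1)).
    { apply Rdiv_lt_0_compat; auto. pose proof (proj1 Hn x); lra. }
    destruct (Hc _ He) as [N HN]. specialize (HN N (le_n N) x).
    destruct (Hg N) as [_ Hg0].
    pose proof (Hdtri x (g N x) (h x)). rewrite Hg0 in H0.
    pose proof (Hdle (g N x) (h x)).
    assert (dinf x (h x) / (nrm x + 1) * nrm x < dinf x (h x)).
    { pose proof (proj1 Hn x).
      replace (dinf x (h x) / (nrm x + 1) * nrm x) with (dinf x (h x) - dinf x (h x) / (nrm x + 1))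
        by (field; lra). lra. }
    lra.
  - intros u v. split.
    + intros Huv. destruct (hard n nrm H L d dinf Hn Hhol Hmet Hpw u v Huv) as [g [Hg [Hg0 ->]]].
      exists g. split; auto. split; auto. intros x. apply Rle_antisym; auto.
    + intros [g [[_ Hg] ->]]. apply Hg.
Qed.
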